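(* $\mathbf{REG}\subset\mathbf{GRLOWJ}$, i.e., every regular language is accepted by some GRLOWJFA, and the inclusion is proper.
   Context: $\mathbf{REG}$ is the class of regular languages. ''Subword'' means a contiguous factor. A GRLOWJFA is a tuple $\mathcal{A}=(\Sigma,Q,q_0,F,R)$ with $\Sigma$ a finite alphabet, $Q$ a finite state set, $q_0\in Q$, $F\subseteq Q$, and $R\subset Q\times\Sigma^+\times Q$ a finite set of rules such that for each $p\in Q$, $w\in\Sigma^+$ at most one $q$ has $(p,w,q)\in R$ (meaning: go from $p$ to $q$ deleting $w$). $\Sigma_p=\{w:(p,w,q)\in R\text{ for some }q\}$. Configurations lie in $\Sigma^*Q\Sigma^*$. Moves $\curvearrowright$: (1) for $t,u,v\in\Sigma^*$ and $(p,x,q)\in R$: $tpuxv\curvearrowright tuqv$ provided $u$ contains no word of $\Sigma_p$ as a subword and there are no $u_1,x_2\in\Sigma^*$, $u_2,x_1\in\Sigma^+$ with $u=u_1u_2$, $x=x_1x_2$, $u_2x_1=x$; (2) for $x\in\Sigma^+$, $y\in\Sigma^*$ with $y$ containing no word of $\Sigma_p$ as a subword: $xpy\curvearrowright pxy$. $L_{GRL}(\mathcal{A})=\{w\in\Sigma^*: q_0w\curvearrowright^* q_f \text{ for some } q_f\in F\}$. $\mathbf{GRLOWJ}$ is the class of languages so accepted. *)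

(* Defs.v *)
From mathcomp Require Import all_boot.
Set Implicit Arguments. Unset Strict Implicit. Unset Printing Implicit Defensive.

Definition is_regular (S : finType) (L : seq S -> Prop) : Prop :=
  exists (St : finType) (delta : St -> S -> St) (s0 : St) (Fa : {set St}),
    forall w, L w <-> foldl delta s0 w \in Fa.

Section GRL.
Variables (S : finType) (Q : finType).

(* A rule (p, x, q) : go from p to q deleting x. The finite rule set R is
   given as a list. *)
Definition rule := (Q * seq S * Q)%type.

Definition valid_rules (R : seq rule) : Prop :=
  (forall p x q, (p, x, q) \in R -> x != [::]) /\
  (forall p x q q', (p, x, q) \in R -> (p, x, q') \in R -> q = q').

Definition Sigma_p (R : seq rule) (p : Q) (w : seq S) : Prop :=
  exists q, (p, w, q) \in R.

Definition avoids (R : seq rule) (p : Q) (u : seq S) : Prop :=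
  forall w, Sigma_p R p w -> ~~ infix w u.

Definition config := (seq S * Q * seq S)%type.

Inductive grl_step (R : seq rule) : config -> config -> Prop :=
| grl_read : forall (t u x v : seq S) (p q : Q),
    (p, x, q) \in R ->
    avoids R p u ->
    ~ (exists u1 u2 x1 x2 : seq S,
          u2 != [::] /\ x1 != [::] /\ u = u1 ++ u2 /\ x = x1 ++ x2 /\ u2 ++ x1 = x) ->
    grl_step R (t, p, u ++ x ++ v) (t ++ u, q, v)
| grl_jump : forall (x y : seq S) (p : Q),
    x != [::] ->
    avoids R p y ->
    grl_step R (x, p, y) ([::], p, x ++ y).

Inductive grl_star (R : seq rule) : config -> config -> Prop :=
| grl_refl : forall c, grl_star R c c
| grl_trans : forall c1 c2 c3, grl_step R c1 c2 -> grl_star R c2 c3 -> grl_star R c1 c3.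

Definition L_GRL (R : seq rule) (q0 : Q) (F : {set Q}) (w : seq S) : Prop :=
  exists qf, qf \in F /\ grl_star R ([::], q0, w) ([::], qf, [::]).

End GRL.

Definition is_GRLOWJ (S : finType) (L : seq S -> Prop) : Prop :=
  exists (Q : finType) (q0 : Q) (F : {set Q}) (R : seq (rule S Q)),
    valid_rules R /\ forall w, L w <-> L_GRL R q0 F w.

(* Main.v *)
Require Import Defs.
From mathcomp Require Import all_boot zify.
Set Implicit Arguments. Unset Strict Implicit. Unset Printing Implicit Defensive.

Section Part1.
Variables (S St : finType) (delta : St -> S -> St).

Definition R1 : seq (rule S St) :=
  [seq (p, [:: a], delta p a) | p <- enum St, a <- enum S].

Lemma R1P p x q : (p, x, q) \in R1 -> exists a, x = [:: a] /\ q = delta p a.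
Proof.
case/allpairsP=> [[p' a] [_ _ /=]] [-> -> ->] /=; by exists a.
Qed.

Lemma R1_in p a : (p, [:: a], delta p a) \in R1.
Proof. by apply: (allpairs_f (fun p a => (p, [:: a], delta p a))); rewrite mem_enum. Qed.

Lemma R1_valid : valid_rules R1.
Proof.
split.
- by move=> p x q /R1P [a [-> _]].
- move=> p x q q' /R1P [a [-> ->]] /R1P [b [[->] ->]] //.
Qed.

Lemma no_overlap1 (c : S) u : ~ (exists u1 u2 x1 x2 : seq S,
  u2 != [::] /\ x1 != [::] /\ u = u1 ++ u2 /\ [:: c] = x1 ++ x2 /\ u2 ++ x1 = [:: c]).
Proof.
move=> [u1 [u2 [x1 [x2 [H1 [H2 [_ [_ H]]]]]]]].
move: (congr1 size H); rewrite size_cat /=.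
case: u2 H1 {H} => [|? ?] //; case: x1 H2 => [|? ?] //= _ _; lia.
Qed.

Lemma R1_step c1 c2 : grl_step R1 c1 c2 -> c1.1.1 = [::] ->
  exists a v, c1.2 = a :: v /\ c2 = ([::], delta c1.1.2 a, v).
Proof.
case=> [t u x v p q Hr Ha Hno | x y p Hx Ha] /= Ht; last by rewrite Ht in Hx.
subst t.
case: u Ha Hno => [|c u'] Ha Hno.
- move: (R1P Hr) => [a [Ex Eq]]. rewrite Ex Eq /=.
  by exists a, v.
- exfalso. have := Ha [:: c] (ex_intro _ (delta p c) (R1_in p c)).
  by rewrite infix1s mem_head.
Qed.

Lemma R1_sound c1 c3 : grl_star R1 c1 c3 -> forall qf, c1.1.1 = [::] ->
  c3 = ([::], qf, [::]) -> foldl delta c1.1.2 c1.2 = qf.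
Proof.
elim=> [c|[[t1 p1] v1] c2 c3' Hs _ IH] qf Ht E.
- by subst c.
- have [a [v [Ev Ec2]]] := R1_step Hs Ht.
  simpl in Ev, Ht. subst. rewrite /=. by apply: IH.
Qed.

Lemma R1_comp w p : grl_star R1 ([::], p, w) ([::], foldl delta p w, [::]).
Proof.
elim: w p => [|a w IH] p /=; first exact: grl_refl.
apply: (@grl_trans _ _ _ _ ([::], delta p a, w)); last exact: IH.
apply: (@grl_read _ _ R1 [::] [::] [:: a] w p (delta p a)).
- exact: R1_in.
- by move=> x [q /R1P [b [-> _]]].
- exact: no_overlap1.
Qed.

End Part1.

Lemma part1 (S : finType) (L : seq S -> Prop) : is_regular L -> is_GRLOWJ L.
Proof.
move=> [St [delta [s0 [Fa H]]]].
exists St, s0, Fa, (R1 delta); split; first exact: R1_valid.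
move=> w; rewrite H; split.
- move=> Hin; exists (foldl delta s0 w); split => //; exact: R1_comp.
- move=> [qf [Hq Hs]]. by rewrite (R1_sound Hs (erefl _) (erefl _)).
Qed.

Definition R2 : seq (rule bool bool) := [:: (true, [:: true], false); (false, [:: false], true)].

Lemma R2P p x q : (p, x, q) \in R2 -> x = [:: p] /\ q = ~~ p.
Proof. by rewrite !inE => /orP [] /eqP [-> -> ->]. Qed.

Lemma R2_in p : (p, [:: p], ~~ p) \in R2.
Proof. by case: p. Qed.

Lemma R2_valid : valid_rules R2.
Proof.
split.
- by move=> p x q /R2P [-> _].
- by move=> p x q q' /R2P [_ ->] /R2P [_ ->].
Qed.

Lemma R2_avoids p u : p \notin u -> avoids R2 p u.
Proof. by move=> H w [q /R2P [-> _]]; rewrite infix1s. Qed.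

Lemma no_overlap2 (c : bool) u : ~ (exists u1 u2 x1 x2 : seq bool,
  u2 != [::] /\ x1 != [::] /\ u = u1 ++ u2 /\ [:: c] = x1 ++ x2 /\ u2 ++ x1 = [:: c]).
Proof.
move=> [u1 [u2 [x1 [x2 [H1 [H2 [_ [_ H]]]]]]]].
move: (congr1 size H); rewrite size_cat /=.
case: u2 H1 {H} => [|? ?] //; case: x1 H2 => [|? ?] //= _ _; lia.
Qed.

Definition cnt (b : bool) (s : seq bool) := count_mem b s.
Definition bal (p : bool) (s : seq bool) :=
  if p then cnt true s = cnt false s else (cnt true s).+1 = cnt false s.

Lemma cnt_cat b s1 s2 : cnt b (s1 ++ s2) = cnt b s1 + cnt b s2.
Proof. exact: count_cat. Qed.

Lemma cnt_size s : cnt true s + cnt false s = size s.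
Proof. by elim: s => //= [[]] s /=; rewrite /cnt /= => <-; lia. Qed.

Lemma cnt1 b c : cnt b [:: c] = (c == b).
Proof. by rewrite /cnt /= addn0 eq_sym. Qed.

Lemma split_first (c : bool) v : c \in v -> exists u v', v = u ++ c :: v' /\ c \notin u.
Proof.
elim: v => [|d v IH] //; rewrite inE; case: (eqVneq c d) => [<- _|ne /= H].
- by exists [::], v.
- have [u [v' [-> Hu]]] := IH H. exists (d :: u), v'; split => //.
  by rewrite inE negb_or ne.
Qed.

Lemma R2_sound c1 c3 : grl_star R2 c1 c3 -> c3 = ([::], true, [::]) ->
  bal c1.1.2 (c1.1.1 ++ c1.2).
Proof.
elim=> [c -> //|c1' c2 c3' Hs _ IH] E.
have := IH E; clear IH.
case: Hs => [t u x v p q Hr Ha Hno | x y p Hx Ha] /=; last by [].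
move: (R2P Hr) => [-> ->] {Hr Ha Hno}.
rewrite /bal !cnt_cat !cnt1; case: p => /=; lia.
Qed.

Lemma cnt_mem b s : cnt b s != 0 -> b \in s.
Proof. move=> H; apply: contraT => /count_memPn E; by move: H; rewrite /cnt E. Qed.

Lemma R2_comp n t v p : size (t ++ v) <= n -> bal p (t ++ v) ->
  grl_star R2 (t, p, v) ([::], true, [::]).
Proof.
elim: n t v p => [|n IH] t v p Hs Hb.
- move: Hs; rewrite leqn0 => /nilP; case: t Hb => //; case: v => // Hb _.
  case: p Hb => // _; exact: grl_refl.
have Hread : forall t v, p \in v -> size (t ++ v) <= n.+1 -> bal p (t ++ v) ->
    grl_star R2 (t, p, v) ([::], true, [::]).
  move=> t1 v1 /split_first [u [v' [-> Hu]]] Hs1 Hb1.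
  apply: (@grl_trans _ _ _ _ (t1 ++ u, ~~ p, v')).
    apply: (@grl_read _ _ R2 t1 u [:: p] v' p (~~ p)).
    - exact: R2_in.
    - exact: R2_avoids.
    - exact: no_overlap2.
  apply: IH.
  - move: Hs1; rewrite !size_cat /=; lia.
  - clear Hs1; move: Hb1; rewrite /bal !cnt_cat /= /cnt /=; case: p Hb {Hu} => /= _; lia.
case: (boolP (p \in v)) => Hpv; first exact: Hread.
case: t Hs Hb => [|d t'] Hs Hb.
- clear Hread IH; move: Hb (cnt_size v) (elimT count_memPn Hpv); rewrite /bal /=.
  case: p Hpv => _ Hb Hsz E; have E' : cnt _ v = 0 := E.
  + have Hv : size v = 0 by lia.
    move: Hv; move/eqP; rewrite size_eq0 => /eqP ->; exact: grl_refl.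
  + lia.
- apply: (@grl_trans _ _ _ _ ([::], p, (d :: t') ++ v)).
    apply: grl_jump => //; exact: R2_avoids.
  apply: Hread => //.
  apply: cnt_mem; move: Hb (cnt_size ((d :: t') ++ v)); rewrite /bal; case: p {Hpv} => /=; lia.
Qed.

Definition Leq (w : seq bool) : Prop := cnt true w = cnt false w.

Lemma Leq_GRL : is_GRLOWJ Leq.
Proof.
exists bool, true, [set true], R2; split; first exact: R2_valid.
move=> w; split.
- move=> H; exists true; split; first by rewrite inE.
  exact: (@R2_comp (size w)).
- move=> [qf [Hq Hs]]; move: Hq; rewrite inE => /eqP Eq; subst qf.
  exact: (R2_sound Hs).
Qed.

Lemma cnt_nseq b c n : cnt b (nseq n c) = (c == b) * n.
Proof. by rewrite /cnt count_nseq. Qed.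

Lemma Leq_nonreg : ~ is_regular Leq.
Proof.
move=> [St [delta [s0 [Fa H]]]].
pose f (i : 'I_(#|St|.+1)) := foldl delta s0 (nseq i true).
case: (boolP [exists i, [exists j, (i != j) && (f i == f j)]]) => [/existsP [i /existsP [j /andP [ne /eqP E]]]|Hn].
- have Hi : Leq (nseq i true ++ nseq i false).
    by rewrite /Leq !cnt_cat !cnt_nseq /= addnC.
  have : Leq (nseq j true ++ nseq i false).
    apply/H; rewrite foldl_cat -/(f j) -E /f -foldl_cat; by apply/H.
  rewrite /Leq !cnt_cat !cnt_nseq /= => Eij.
  apply: (negP ne); apply/eqP; apply: val_inj; move: Eij => /=; lia.
- have inj : injective f.
    move=> i j E; apply/eqP; apply: contraNT Hn => ne.
    by apply/existsP; exists i; apply/existsP; exists j; rewrite ne E eqxx.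
  by move: (@leq_card _ _ f inj); rewrite card_ord ltnn.
Qed.

Theorem proposition3 :
  (forall (S : finType) (L : seq S -> Prop), is_regular L -> is_GRLOWJ L) /\
  (exists (S : finType) (L : seq S -> Prop), is_GRLOWJ L /\ ~ is_regular L).
Proof.
split; first exact: part1.
exists bool, Leq; split; [exact: Leq_GRL | exact: Leq_nonreg].
Qed.
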